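(* Let $m,n,k$ be positive integers, $A\in\mathbb{R}^{m\times n}$ satisfying the $(2k+1)$-RIP, $x^*\in\mathbb{R}^n$ with support $S^*$, $|S^*|\le k$, $e\in\mathbb{R}^m$, $y=Ax^*+e$. For every initialization $\mathcal{X}^0$, every $\eta>0$ and every $t\in\mathbb{N}$, the SEA iterates satisfy $$\|(x^t-x^* )_{S^t}\|_2\le\frac{\delta_{2k}}{1-\delta_k}\frac{\|u^t\|_2}{\eta}+\frac{\sqrt{1+\delta_k}}{1-\delta_k}\|e\|_2.$$
   Context: For $l\in\{1,\dots,n\}$, the restricted isometry constant $\delta_l$ of $A$ is the smallest $\delta\ge0$ such that $(1-\delta)\|x\|_2^2\le\|Ax\|_2^2\le(1+\delta)\|x\|_2^2$ for all $x$ with at most $l$ nonzero entries; $A$ satisfies the $l$-RIP if $\delta_l<1$. $S^*=\{i:x^*_i\neq0\}$. For $v\in\mathbb{R}^n$, $\mathrm{largest}_k(v)$ is the set of indices of the $k$ entries of $v$ with largest absolute value (ties broken by selecting the highest indices). For $S\subseteq\{1,\dots,n\}$, $A_S$ is the submatrix of columns indexed by $S$, $v_S$ the restriction of a vector to $S$, $A_S^\dagger$ the Moore–Penrose pseudoinverse of $A_S$. SEA with initialization $\mathcal{X}^0$ and step size $\eta$ generates, for $t=0,1,2,\dots$: $S^t=\mathrm{largest}_k(\mathcal{X}^t)$; $x^t_i=0$ for $i\notin S^t$ and $x^t_{S^t}=A_{S^t}^\dagger y$; $\mathcal{X}^{t+1}=\mathcal{X}^t-\eta A^T(Ax^t-y)$.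 The oracle direction is $u^t_i=-\eta x^*_i$ if $i\in S^*\setminus S^t$ and $u^t_i=0$ otherwise. *)

(* Defs.v *)
From HB Require Import structures.
From mathcomp Require Import all_boot all_order all_algebra.
From mathcomp Require Import classical_sets reals.
Set Implicit Arguments. Unset Strict Implicit. Unset Printing Implicit Defensive.
Import Order.TTheory GRing.Theory Num.Theory.
Local Open Scope ring_scope.
Local Open Scope classical_set_scope.

Section SEA.
Variable R : realType.

Definition norm2 {p : nat} (v : 'cV[R]_p) : R := Num.sqrt (\sum_(i < p) v i 0 ^+ 2).

Definition supp {p : nat} (v : 'cV[R]_p) : {set 'I_p} := [set i | v i 0 != 0].
Definition sparse {p : nat} (l : nat) (v : 'cV[R]_p) : Prop := (#|supp v| <= l)%N.

(* restricted isometry constant delta_l: smallest delta >= 0 with the RIP inequalities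
   for all l-sparse x (the set is closed and nonempty, so inf = min) *)
Definition rip_const {m n : nat} (A : 'M[R]_(m, n)) (l : nat) : R :=
  inf [set d : R | 0 <= d /\ forall x : 'cV[R]_n, sparse l x ->
        (1 - d) * norm2 x ^+ 2 <= norm2 (A *m x) ^+ 2 /\
        norm2 (A *m x) ^+ 2 <= (1 + d) * norm2 x ^+ 2].

(* Moore--Penrose pseudoinverse: the (unique) matrix satisfying the Penrose equations *)
Definition mp_pinv {p q : nat} (M : 'M[R]_(p, q)) : 'M[R]_(q, p) :=
  xget 0 [set B : 'M[R]_(q, p) | [/\ M *m B *m M = M, B *m M *m B = B,
                                   (M *m B)^T = M *m B & (B *m M)^T = B *m M]].

(* submatrix of columns indexed by S (in increasing order), restriction of a vector to S,
   and the embedding of R^S back into R^n (zero outside S) *)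
Definition colsS {m n : nat} (S : {set 'I_n}) (A : 'M[R]_(m, n)) : 'M[R]_(m, #|S|) :=
  colsub (enum_val (A := S)) A.
Definition restr {n : nat} (S : {set 'I_n}) (v : 'cV[R]_n) : 'cV[R]_#|S| :=
  rowsub (enum_val (A := S)) v.
Definition embedS {n : nat} (S : {set 'I_n}) : 'M[R]_(n, #|S|) :=
  \matrix_(i, j) (i == enum_val (A := S) j)%:R.

(* largest_k v: indices of the k largest |v_i|, ties broken by selecting highest indices.
   j "beats" i when |v_j| > |v_i|, or |v_j| = |v_i| and j > i; i is selected iff
   fewer than k indices beat it. *)
Definition beats {n : nat} (v : 'cV[R]_n) (j i : 'I_n) : bool :=
  (`|v i 0| < `|v j 0|) || ((`|v j 0| == `|v i 0|) && (i < j)%N).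
Definition largest {n : nat} (k : nat) (v : 'cV[R]_n) : {set 'I_n} :=
  [set i | (#|[set j | beats v j i]| < k)%N].

Definition sea_x {m n : nat} (A : 'M[R]_(m, n)) (y : 'cV[R]_m) (S : {set 'I_n}) : 'cV[R]_n :=
  embedS S *m (mp_pinv (colsS S A) *m y).

Fixpoint sea_X {m n : nat} (A : 'M[R]_(m, n)) (y : 'cV[R]_m) (k : nat) (eta : R)
  (X0 : 'cV[R]_n) (t : nat) : 'cV[R]_n :=
  match t with
  | 0 => X0
  | t'.+1 => let X := sea_X A y k eta X0 t' in
             X - eta *: (A^T *m (A *m sea_x A y (largest k X) - y))
  end.

Definition sea_S {m n : nat} A y k eta X0 t : {set 'I_n} :=
  largest k (@sea_X m n A y k eta X0 t).
Definition sea_xt {m n : nat} A y k eta X0 t : 'cV[R]_n :=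
  sea_x A y (@sea_S m n A y k eta X0 t).

Definition oracle {m n : nat} A y k eta X0 (xs : 'cV[R]_n) t : 'cV[R]_n :=
  \col_i (if (i \in supp xs) && (i \notin @sea_S m n A y k eta X0 t)
          then - (eta * xs i 0) else 0).

End SEA.

(* Main.v *)
Require Import Defs.
From HB Require Import structures.
From mathcomp Require Import all_boot all_order all_algebra.
From mathcomp Require Import classical_sets reals.
From mathcomp Require Import ring lra.
Import Order.TTheory GRing.Theory Num.Theory.
Local Open Scope ring_scope.

Module SEAaux.
Set Implicit Arguments. Unset Strict Implicit. Unset Printing Implicit Defensive.

Section Aux.
Variable R : realType.

Definition dot {p : nat} (a b : 'cV[R]_p) : R := \sum_(i < p) a i 0 * b i 0.

Lemma dotC p (a b : 'cV[R]_p) : dot a b = dot b a.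
Proof. by apply: eq_bigr => i _; rewrite mulrC. Qed.

Lemma dotDl p (a b c : 'cV[R]_p) : dot (a + b) c = dot a c + dot b c.
Proof. by rewrite /dot -big_split; apply: eq_bigr => i _; rewrite !mxE mulrDl. Qed.

Lemma dotBl p (a b c : 'cV[R]_p) : dot (a - b) c = dot a c - dot b c.
Proof.
rewrite /dot -sumrB; apply: eq_bigr => i _; rewrite !mxE; ring.
Qed.

Lemma dotZl p (x : R) (a c : 'cV[R]_p) : dot (x *: a) c = x * dot a c.
Proof. rewrite /dot mulr_sumr; apply: eq_bigr => i _; rewrite !mxE; ring. Qed.

Lemma dotDr p (a b c : 'cV[R]_p) : dot c (a + b) = dot c a + dot c b.
Proof. by rewrite dotC dotDl !(dotC c). Qed.
Lemma dotBr p (a b c : 'cV[R]_p) : dot c (a - b) = dot c a - dot c b.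
Proof. by rewrite dotC dotBl !(dotC c). Qed.
Lemma dotZr p (x : R) (a c : 'cV[R]_p) : dot c (x *: a) = x * dot c a.
Proof. by rewrite dotC dotZl dotC. Qed.

Lemma dotNl p (a c : 'cV[R]_p) : dot (- a) c = - dot a c.
Proof. by rewrite -scaleN1r dotZl mulN1r. Qed.
Lemma dotNr p (a c : 'cV[R]_p) : dot c (- a) = - dot c a.
Proof. by rewrite dotC dotNl dotC. Qed.

Lemma dot_ge0 p (a : 'cV[R]_p) : 0 <= dot a a.
Proof. by apply: sumr_ge0 => i _; rewrite -expr2 sqr_ge0. Qed.

Lemma dot_mx p (a b : 'cV[R]_p) : dot a b = (a^T *m b) 0 0.
Proof. by rewrite mxE; apply: eq_bigr => i _; rewrite mxE. Qed.

Lemma dot_mulmx p q (M : 'M[R]_(p, q)) a b : dot a (M *m b) = dot (M^T *m a) b.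
Proof. by rewrite !dot_mx trmx_mul trmxK mulmxA. Qed.

Lemma norm2_ge0 p (a : 'cV[R]_p) : 0 <= norm2 a.
Proof. exact: sqrtr_ge0. Qed.

Lemma norm2_sq p (a : 'cV[R]_p) : norm2 a ^+ 2 = dot a a.
Proof.
rewrite /norm2 sqr_sqrtr; last exact: dot_ge0.
by apply: eq_bigr => i _; rewrite expr2.
Qed.

Lemma dot_eq0 p (a : 'cV[R]_p) : dot a a = 0 -> a = 0.
Proof.
move=> h; apply/matrixP => i j; rewrite (ord1 j) mxE.
have nn : forall l : 'I_p, predT l -> 0 <= a l 0 * a l 0.
  by move=> l _; rewrite -expr2 sqr_ge0.
have h2 : a i 0 * a i 0 = 0 := @psumr_eq0P _ _ predT (fun i => a i 0 * a i 0) nn h i isT.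
by move: h2 => /eqP; rewrite mulf_eq0 orbb => /eqP.
Qed.

Lemma norm2Z p (x : R) (a : 'cV[R]_p) : norm2 (x *: a) = `|x| * norm2 a.
Proof.
rewrite /norm2 -sqrtr_sqr -sqrtrM ?sqr_ge0 // mulr_sumr; congr Num.sqrt.
by apply: eq_bigr => i _; rewrite mxE exprMn.
Qed.

Lemma scaling (X a b : R) : 0 <= a -> 0 <= b ->
  (forall mu, 0 < mu -> 2 * mu * X <= mu ^+ 2 * a ^+ 2 + b ^+ 2) -> X <= a * b.
Proof.
move=> a0 b0 H.
have [a_gt0|] := ltrP 0 a; last first.
  move=> ale; have az : a = 0 by apply/le_anti; rewrite ale a0.
  rewrite az mul0r; rewrite leNgt; apply/negP => Xp.
  have := H ((b ^+ 2 + 1) / X) (divr_gt0 (ltr_wpDl (sqr_ge0 b) ltr01) Xp).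
  move=> h; have q : 0 < (b ^+ 2 + 1) / X by rewrite divr_gt0 // ltr_wpDl // sqr_ge0.
  have e : 2 * ((b ^+ 2 + 1) / X) * X = 2 * (b ^+ 2 + 1) by field; rewrite gt_eqF.
  have a2 : a ^+ 2 = 0 by rewrite az expr2 mulr0.
  have := sqr_ge0 b; move: h; rewrite e a2 mulr0 add0r; lra.
have [b_gt0|] := ltrP 0 b; last first.
  move=> ble; have bz : b = 0 by apply/le_anti; rewrite ble b0.
  rewrite bz mulr0 leNgt; apply/negP => Xp.
  have := H (X / a ^+ 2) (divr_gt0 Xp (exprn_gt0 2 a_gt0)).
  have b2 : b ^+ 2 = 0 by rewrite bz expr2 mulr0.
  rewrite b2 addr0 => h.
  have e : (X / a ^+ 2) ^+ 2 * a ^+ 2 = X * (X / a ^+ 2).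
    by field; rewrite gt_eqF.
  rewrite e in h. have q : 0 < X / a ^+ 2 by rewrite divr_gt0 // exprn_gt0.
  nra.
have := H (b / a) (divr_gt0 b_gt0 a_gt0).
have e : (b / a) ^+ 2 * a ^+ 2 + b ^+ 2 = 2 * (b / a) * (a * b).
  by field; rewrite gt_eqF.
rewrite e => h.
have q : 0 < 2 * (b / a) by rewrite mulr_gt0 // divr_gt0.
by rewrite -(ler_pM2l q).
Qed.

Lemma cauchy_schwarz p (a b : 'cV[R]_p) : dot a b <= norm2 a * norm2 b.
Proof.
apply: scaling; rewrite ?norm2_ge0 // => mu mu0.
rewrite !norm2_sq.
have := dot_ge0 (mu *: a - b).
rewrite dotBl !dotBr !dotZl !dotZr (dotC b a); lra.
Qed.

End Aux.


Section Rip.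
Variable R : realType.
Variables (m n : nat) (A : 'M[R]_(m, n)).
Local Open Scope classical_set_scope.

Definition ripset (l : nat) : set R := [set d : R | 0 <= d /\ forall x : 'cV[R]_n, sparse l x ->
        (1 - d) * norm2 x ^+ 2 <= norm2 (A *m x) ^+ 2 /\
        norm2 (A *m x) ^+ 2 <= (1 + d) * norm2 x ^+ 2].

Lemma opnorm_bound : exists C : R, 0 <= C /\ forall x : 'cV[R]_n,
  norm2 (A *m x) ^+ 2 <= C * norm2 x ^+ 2.
Proof.
pose r (i : 'I_m) : 'cV[R]_n := (row i A)^T.
exists (\sum_i norm2 (r i) ^+ 2); split.
  by apply: sumr_ge0 => i _; rewrite sqr_ge0.
move=> x; rewrite mulr_suml [norm2 (A *m x) ^+ 2]norm2_sq.
apply: ler_sum => i _.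
have e : (A *m x) i 0 = dot (r i) x.
  by rewrite !mxE; apply: eq_bigr => j _; rewrite !mxE.
rewrite e -exprMn.
have h1 := cauchy_schwarz (r i) x.
have h2 := cauchy_schwarz (- r i) x.
have : dot (- r i) x = - dot (r i) x.
  by rewrite -scaleN1r dotZl mulN1r.
have : norm2 (- r i) = norm2 (r i).
  by rewrite -scaleN1r norm2Z normrN normr1 mul1r.
move=> E1 E2; rewrite E1 E2 in h2.
have := norm2_ge0 (r i); have := norm2_ge0 x.
nra.
Qed.

Lemma ripset_nonempty l : ripset l !=set0.
Proof.
have [C [C0 HC]] := opnorm_bound.
exists (C + 1); split; first lra.
move=> x _; split.
  have := sqr_ge0 (norm2 (A *m x)); have := sqr_ge0 (norm2 x); nra.
have := HC x; have := sqr_ge0 (norm2 x); nra.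
Qed.

Lemma ripset_lb l : lbound (ripset l) 0.
Proof. by move=> d [d0 _]. Qed.

Lemma eps_lemma (a b c : R) : 0 <= c -> (forall eps, 0 < eps -> a <= b + eps * c) -> a <= b.
Proof.
move=> c0 H; apply/ler_addgt0Pr => e e0.
have q : 0 < e / (c + 1) by rewrite divr_gt0 // ltr_wpDl.
apply: (le_trans (H _ q)); rewrite lerD2l.
rewrite mulrAC ler_pdivrMr ?ltr_wpDl //; nra.
Qed.

Lemma rip_ok l : 0 <= rip_const A l /\ forall x : 'cV[R]_n, sparse l x ->
        (1 - rip_const A l) * norm2 x ^+ 2 <= norm2 (A *m x) ^+ 2 /\
        norm2 (A *m x) ^+ 2 <= (1 + rip_const A l) * norm2 x ^+ 2.
Proof.
have hinf : has_inf (ripset l) by split; [exact: ripset_nonempty | exists 0; exact: ripset_lb].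
rewrite /rip_const -/(ripset l); split.
  by apply: lb_le_inf; [exact: ripset_nonempty | exact: ripset_lb].
move=> x sx; have N0 := sqr_ge0 (norm2 x); split.
  apply: (@eps_lemma _ _ (norm2 x ^+ 2)) => // eps e0.
  have [d [d0 Hd] dlt] := inf_adherent e0 hinf.
  have [h _] := Hd x sx. nra.
apply: (@eps_lemma _ _ (norm2 x ^+ 2)) => // eps e0.
have [d [d0 Hd] dlt] := inf_adherent e0 hinf.
have [_ h] := Hd x sx. nra.
Qed.

Lemma rip_mono l l' : (l <= l')%N -> rip_const A l <= rip_const A l'.
Proof.
move=> ll; apply: lb_le_inf; first exact: ripset_nonempty.
move=> d [d0 Hd]; apply: ge_inf; first by exists 0; exact: ripset_lb.
split=> // x sx; apply: Hd; exact: leq_trans sx ll.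
Qed.

End Rip.


Section Largest.
Variable R : realType.
Variable n : nat.
Implicit Types v : 'cV[R]_n.

Lemma beats_irr v i : ~~ beats v i i.
Proof. by rewrite /beats ltxx ltnn andbF. Qed.

Lemma beats_trans v i j l : beats v l j -> beats v j i -> beats v l i.
Proof.
rewrite /beats => /orP[h1|/andP[/eqP e1 h1]] /orP[h2|/andP[/eqP e2 h2]].
- by rewrite (lt_trans h2 h1).
- by rewrite -e2 h1.
- by rewrite e1 h2.
- by rewrite e1 e2 eqxx (ltn_trans h2 h1) orbT.
Qed.

Lemma beats_total v i j : i != j -> beats v i j || beats v j i.
Proof.
move=> nij; rewrite /beats.
case: (ltgtP `|v i 0| `|v j 0|) => h //=; rewrite ?orbT //.
case: (ltngtP i j) => //= e; rewrite ?orbT //.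
by move/eqP: nij; case; apply: val_inj.
Qed.

Lemma largest_card k v : (#|largest k v| <= k)%N.
Proof.
pose f i := #|[set j | beats v j i]|.
have finj : injective f.
  move=> i j fij; apply/eqP; apply/negP => /negP nij.
  have key : forall a b, beats v a b -> (f a < f b)%N.
    move=> a b hab; apply: proper_card; apply/properP; split.
      by apply/fintype.subsetP => c; rewrite !inE => hc; apply: beats_trans hc hab.
    by exists a; rewrite !inE ?beats_irr.
  case/orP: (beats_total v nij) => /key; rewrite fij ltnn //.
rewrite cardE -(size_map f).
rewrite -[X in (_ <= X)%N](size_iota 0 k).
apply: uniq_leq_size; first by rewrite map_inj_uniq // enum_uniq.
move=> x /mapP [i]; rewrite mem_enum inE => hi ->.
rewrite mem_iota leq0n add0n /=; move: hi; rewrite /f.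
congr (_ < _)%N; apply: eq_card => j; rewrite inE.
by apply/idP/idP => [/set_mem|/mem_set].
Qed.

End Largest.


Section Embed.
Variable R : realType.
Variables (m n : nat) (A : 'M[R]_(m, n)) (S : {set 'I_n}).
Local Notation E := (@embedS R n S).
Local Notation f := (enum_val (A := S)).

Lemma colsS_E : colsS S A = A *m E.
Proof.
apply/matrixP => i j; rewrite !mxE (bigD1 (f j)) //= big1 => [|l /negbTE hl].
  by rewrite !mxE eqxx mulr1 addr0.
by rewrite !mxE hl mulr0.
Qed.

Lemma restr_E (v : 'cV[R]_n) : restr S v = E^T *m v.
Proof.
apply/matrixP => j i; rewrite !mxE (bigD1 (f j)) //= big1 => [|l /negbTE hl].
  by rewrite !mxE eqxx mul1r addr0 (ord1 i).
by rewrite !mxE hl mul0r.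
Qed.

Lemma EtE : E^T *m E = 1%:M.
Proof.
apply/matrixP => j j'; rewrite !mxE (bigD1 (f j)) //= big1 => [|l /negbTE hl].
  by rewrite !mxE eqxx mul1r addr0 (inj_eq enum_val_inj).
by rewrite !mxE hl mul0r.
Qed.

Lemma E_out (c : 'cV[R]_#|S|) i : i \notin S -> (E *m c) i 0 = 0.
Proof.
move=> hi; rewrite !mxE big1 // => j _; rewrite !mxE.
case: eqP => [e|]; last by rewrite mul0r.
by move: hi; rewrite e enum_valP.
Qed.

Lemma E_in (c : 'cV[R]_#|S|) j : (E *m c) (f j) 0 = c j 0.
Proof.
rewrite !mxE (bigD1 j) //= big1 => [|l /negbTE hl].
  by rewrite !mxE eqxx mul1r addr0.
by rewrite !mxE (inj_eq enum_val_inj) eq_sym hl mul0r.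
Qed.

Lemma EEt (v : 'cV[R]_n) i : (E *m (E^T *m v)) i 0 = if i \in S then v i 0 else 0.
Proof.
case: ifP => hi; last by rewrite E_out // hi.
rewrite -(enum_rankK_in hi hi) E_in -restr_E mxE.
by rewrite (enum_rankK_in hi hi).
Qed.

Lemma norm2_E (w : 'cV[R]_#|S|) : norm2 (E *m w) = norm2 w.
Proof.
have h : dot (E *m w) (E *m w) = dot w w by rewrite dot_mulmx mulmxA EtE mul1mx.
have nd : forall p (a : 'cV[R]_p), norm2 a = Num.sqrt (dot a a).
  by move=> p a; rewrite /norm2 /dot; congr Num.sqrt; apply: eq_bigr => i _; rewrite expr2.
by rewrite !nd h.
Qed.

Lemma supp_E (w : 'cV[R]_#|S|) : supp (E *m w) \subset S.
Proof.
apply/fintype.subsetP => i; rewrite inE; apply: contraNT => hi.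
by rewrite E_out.
Qed.

End Embed.

Section Cross.
Variable R : realType.
Variables (m n : nat) (A : 'M[R]_(m, n)).

Lemma supp_sub (a : 'cV[R]_n) (S : {set 'I_n}) i : supp a \subset S -> i \notin S -> a i 0 = 0.
Proof.
move=> /fintype.subsetP h hi; apply/eqP; apply: contraNT hi => ai.
by apply: h; rewrite inE.
Qed.

Lemma cross l (a b : 'cV[R]_n) (S1 S2 : {set 'I_n}) : supp a \subset S1 -> supp b \subset S2 ->
  [disjoint S1 & S2] -> (#|S1 :|: S2| <= l)%N ->
  dot (A *m a) (A *m b) <= rip_const A l * norm2 a * norm2 b.
Proof.
move=> ha hb dis card.
have [d0 H] := rip_ok A l.
have ab0 : dot a b = 0.
  apply: big1 => i _.
  case: (boolP (i \in S1)) => h1; last by rewrite (supp_sub ha h1) mul0r.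
  have h2 : i \notin S2 by move: dis; rewrite disjoint_sym => /disjointFl ->.
  by rewrite (supp_sub hb h2) mulr0.
have sp : forall c : R, sparse l (c *: a + b) /\ sparse l (c *: a - b).
  move=> c; split; apply: leq_trans card; apply: subset_leq_card;
    apply/fintype.subsetP => i; rewrite !inE !mxE; apply: contraNT;
    rewrite negb_or => /andP[h1 h2]; rewrite (supp_sub ha h1) (supp_sub hb h2); 
    by rewrite mulr0 ?addr0 ?subr0.
set X := dot (A *m a) (A *m b).
have -> : rip_const A l * norm2 a * norm2 b =
   (Num.sqrt (rip_const A l) * norm2 a) * (Num.sqrt (rip_const A l) * norm2 b).
  by rewrite mulrACA -expr2 sqr_sqrtr // mulrA.
apply: scaling; rewrite ?mulr_ge0 ?sqrtr_ge0 ?norm2_ge0 // => mu mu0.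
rewrite !exprMn sqr_sqrtr // !norm2_sq.
have [sp1 sp2] := sp mu.
have [_ H1] := H _ sp1.
have [H2 _] := H _ sp2.
move: H1 H2; rewrite !norm2_sq !mulmxDr ?mulmxBr ?mulmxN -!scalemxAr.
rewrite !dotDl !dotDr ?dotNl ?dotNr !dotZl !dotZr (dotC b a) ab0 -/X.
rewrite (dotC (A *m b) (A *m a)) -/X.
have := dot_ge0 a; have := dot_ge0 b.
nra.
Qed.

End Cross.


Section Pinv.
Variable R : realType.

Lemma pinv_normal p q (B : 'M[R]_(p, q)) : (forall w : 'cV[R]_q, B *m w = 0 -> w = 0) ->
  B^T *m B *m mp_pinv B = B^T.
Proof.
move=> Hinj.
have GT : (B^T *m B)^T = B^T *m B by rewrite trmx_mul trmxK.
have Gu : B^T *m B \in unitmx.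
  rewrite unitmxE unitfE; apply/negP => /det0P [v vn0 vG].
  have Gw : B^T *m B *m v^T = 0 by rewrite -GT -trmx_mul vG trmx0.
  have Bw : B *m v^T = 0.
    apply: dot_eq0; rewrite dot_mulmx mulmxA Gw.
    by rewrite /dot big1 // => i _; rewrite mxE mul0r.
  move: vn0; rewrite -(trmxK v) (Hinj _ Bw) trmx0 eqxx //.
pose P0 := invmx (B^T *m B) *m B^T.
have e1 : P0 *m B = 1%:M by rewrite /P0 -mulmxA mulVmx.
have hP : exists P : 'M[R]_(q, p), [/\ B *m P *m B = B, P *m B *m P = P,
                                   (B *m P)^T = B *m P & (P *m B)^T = P *m B].
  exists P0; split.
  - by rewrite -mulmxA e1 mulmx1.
  - by rewrite e1 mul1mx.
  - by rewrite /P0 !trmx_mul trmxK trmx_inv GT !mulmxA.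
  - by rewrite e1 trmx1.
have [h1 h2 h3 h4] : [/\ B *m mp_pinv B *m B = B, mp_pinv B *m B *m mp_pinv B = mp_pinv B,
     (B *m mp_pinv B)^T = B *m mp_pinv B & (mp_pinv B *m B)^T = mp_pinv B *m B].
  exact: (xgetPex 0 hP).
by rewrite -mulmxA -h3 -trmx_mul h1.
Qed.

End Pinv.


Lemma in_supp (R : realType) n (v : 'cV[R]_n) i : (i \in supp v) = (v i 0 != 0).
Proof. by rewrite inE. Qed.

End SEAaux.
Import SEAaux.

Theorem lemmaC10 (R : realType) (m n k : nat) (A : 'M[R]_(m, n))
  (xs : 'cV[R]_n) (e : 'cV[R]_m) (X0 : 'cV[R]_n) (eta : R) (t : nat) :
  (0 < m)%N -> (0 < n)%N -> (0 < k)%N ->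
  (k.*2.+1 <= n)%N -> rip_const A k.*2.+1 < 1 ->
  (#|supp xs| <= k)%N -> 0 < eta ->
  let y := A *m xs + e in
  let St := sea_S A y k eta X0 t in
  let xt := sea_xt A y k eta X0 t in
  let u := oracle A y k eta X0 xs t in
  norm2 (restr St (xt - xs))
    <= rip_const A k.*2 / (1 - rip_const A k) * (norm2 u / eta)
       + Num.sqrt (1 + rip_const A k) / (1 - rip_const A k) * norm2 e.
Proof.
move=> _ _ _ _ Hrip Hxs eta0; cbv zeta.
set y := A *m xs + e.
set S := sea_S A y k eta X0 t.
set xt := sea_xt A y k eta X0 t.
set u := oracle A y k eta X0 xs t.
have Sk : (#|S| <= k)%N by exact: largest_card.
have [dk0 Hk] := rip_ok A k.
have [d2k0 _] := rip_ok A k.*2.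
have dk1 : rip_const A k < 1.
  apply: le_lt_trans Hrip; apply: rip_mono.
  by rewrite -addnn; apply: leq_trans (leq_addr k k) (leqnSn _).
set dk := rip_const A k in dk0 Hk dk1 *.
set d2k := rip_const A k.*2 in d2k0 *.
set E := @embedS R n S.
set B := colsS S A.
have BE : B = A *m E by rewrite /B colsS_E.
have spE : forall w : 'cV[R]_#|S|, sparse k (E *m w).
  by move=> w; apply: leq_trans Sk; apply: subset_leq_card; apply: supp_E.
have Binj : forall w : 'cV[R]_#|S|, B *m w = 0 -> w = 0.
  move=> w Bw0; have [h _] := Hk _ (spE w).
  move: h; rewrite mulmxA -BE Bw0 norm2_E.
  have -> : norm2 (0 : 'cV[R]_m) = 0.
    by rewrite /norm2 big1 ?sqrtr0 // => i _; rewrite mxE expr0n.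
  rewrite expr0n /= norm2_sq => h.
  apply: dot_eq0; apply/le_anti; rewrite dot_ge0 andbT.
  rewrite -(@ler_pM2l _ (1 - dk)) ?subr_gt0 // mulr0 //.
have normal := pinv_normal Binj.
set P := mp_pinv B in normal.
set z := P *m y.
have xtE : xt = E *m z by [].
set w := z - E^T *m xs.
have LHS : restr S (xt - xs) = w.
  by rewrite restr_E xtE mulmxBr mulmxA EtE mul1mx.
rewrite LHS.
set r := xs - E *m (E^T *m xs).
have Ay : y = B *m (E^T *m xs) + (A *m r + e).
  by rewrite /y /r BE mulmxBr -!mulmxA addrA subrKC.
have NE : B^T *m B *m z = B^T *m y by rewrite /z mulmxA normal.
have key : B^T *m B *m w = B^T *m (A *m r + e).
  rewrite /w mulmxBr NE {1}Ay mulmxDr mulmxA.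
  by rewrite addrC addKr.
set a := E *m w.
have Ba : B *m w = A *m a by rewrite BE -mulmxA.
have eq1 : norm2 (A *m a) ^+ 2 = dot (A *m a) (A *m r) + dot (A *m a) e.
  rewrite norm2_sq -Ba -dotDr.
  have h1 : dot (B *m w) (B *m w) = dot w (B^T *m B *m w) by rewrite -mulmxA [RHS]dot_mulmx trmxK.
  have h2 : dot (B *m w) (A *m r + e) = dot w (B^T *m (A *m r + e)) by rewrite [RHS]dot_mulmx trmxK.
  by rewrite h1 h2 key.
have rE : forall i, r i 0 = xs i 0 - (if i \in S then xs i 0 else 0).
  move=> i; rewrite -EEt /r; set M := E *m _. by rewrite !mxE.
have supp_r : supp r \subset supp xs :\: S.
  apply/fintype.subsetP => i; rewrite finset.in_setD !in_supp rE.
  by case: (i \in S) => /=; [rewrite subrr eqxx | rewrite subr0].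
have dis : [disjoint S & supp xs :\: S].
  rewrite disjoint_subset; apply/fintype.subsetP => i hi.
  by rewrite [_ \in [predC _]]inE finset.in_setD hi.
have card2 : (#|S :|: (supp xs :\: S)| <= k.*2)%N.
  rewrite -addnn; apply: leq_trans (leq_card_setU _ _).1 _; apply: leq_add => //.
  by apply: leq_trans _ Hxs; apply: subset_leq_card; apply: subsetDl.
have ha : supp a \subset S by apply: supp_E.
have bound1 := cross A ha supp_r dis card2.
have [lk uk] := Hk a (spE w).
have bound2 : dot (A *m a) e <= Num.sqrt (1 + dk) * norm2 a * norm2 e.
  apply: le_trans (cauchy_schwarz _ _) _; apply: ler_wpM2r; first exact: norm2_ge0.
  have e1 : norm2 (A *m a) = Num.sqrt (norm2 (A *m a) ^+ 2).
    by rewrite sqrtr_sqr ger0_norm // norm2_ge0.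
  have e2 : Num.sqrt (1 + dk) * norm2 a = Num.sqrt ((1 + dk) * norm2 a ^+ 2).
    by rewrite sqrtrM ?sqrtr_sqr ?ger0_norm ?norm2_ge0 // addr_ge0.
  by rewrite e1 e2 ler_sqrt // mulr_ge0 ?sqr_ge0 // addr_ge0.
have Na : norm2 a = norm2 w by apply: norm2_E.
have Nr : norm2 u / eta = norm2 r.
  have -> : u = (- eta) *: r.
    apply/matrixP => i j; rewrite (ord1 j) /u /oracle mxE [in RHS]mxE rE in_supp -/S.
    case: (i \in S) => /=; first by rewrite andbF subrr mulr0.
    rewrite andbT subr0; case: eqP => [->|] /=; first by rewrite mulr0.
    by move=> _; rewrite mulNr.
  by rewrite norm2Z normrN gtr0_norm // mulrAC divff ?gt_eqF // mul1r.
rewrite Nr; rewrite Na in lk bound1 bound2.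
have c0 : 0 < 1 - dk by rewrite subr_gt0.
have -> : d2k / (1 - dk) * norm2 r + Num.sqrt (1 + dk) / (1 - dk) * norm2 e =
    (d2k * norm2 r + Num.sqrt (1 + dk) * norm2 e) / (1 - dk).
  by field; rewrite gt_eqF.
rewrite ler_pdivlMr //.
have N0 := norm2_ge0 w; have r0 := norm2_ge0 r; have e0 := norm2_ge0 e.
have s0 := sqrtr_ge0 (1 + dk).
have T0 : 0 <= d2k * norm2 r + Num.sqrt (1 + dk) * norm2 e by rewrite addr_ge0 ?mulr_ge0.
have main : (1 - dk) * norm2 w ^+ 2 <= norm2 w * (d2k * norm2 r + Num.sqrt (1 + dk) * norm2 e).
  apply: (le_trans lk); rewrite eq1; apply: (le_trans (lerD bound1 bound2)).
  by rewrite le_eqVlt; apply/orP; left; apply/eqP; ring.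
case: (ltrP 0 (norm2 w)) => Np; first nra.
have -> : norm2 w = 0 by apply/le_anti; rewrite Np N0.
by rewrite mul0r.
Qed.
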